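(* Let $n\ge 1$, $A\in\mathbb{R}^{n\times n}$ and $C\in\mathbb{R}^{1\times n}$, with $(A,C)$ an observable pair and all eigenvalues of $A$ nonzero. If all eigenvalues of $A$ are positive real numbers, then for any $n$ distinct nonnegative integers $t_1,\ldots,t_n$, the matrix with rows $CA^{t_1},\ldots,CA^{t_n}$ has rank $n$.
   Context: Setting: discrete-time single-output system $x(t+1)=Ax(t)+Bu(t)$, $y(t)=Cx(t)+Du(t)$ with output measured at selected time instances; the matrix with rows $CA^{t_i}$ is the sample-based observability matrix. $(A,C)$ observable means the matrix with rows $C,CA,\ldots,CA^{n-1}$ has rank $n$. *)

(* Defs.v *)
From mathcomp Require Import all_boot all_order all_algebra.
From mathcomp Require Import complex.
Set Implicit Arguments. Unset Strict Implicit. Unset Printing Implicit Defensive.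
Import Order.TTheory GRing.Theory Num.Theory.
Local Open Scope ring_scope.

Definition sample_obs_mx (R : comNzRingType) (n m : nat)
    (A : 'M[R]_n) (C : 'rV[R]_n) (t : 'I_m -> nat) : 'M[R]_(m, n) :=
  \matrix_(i < m, j < n) (C *m A ^+ t i) 0 j.

Definition obs_mx (R : comNzRingType) (n : nat) (A : 'M[R]_n) (C : 'rV[R]_n)
  : 'M[R]_(n, n) := sample_obs_mx A C (fun i : 'I_n => nat_of_ord i).

Definition observable (R : fieldType) (n : nat) (A : 'M[R]_n) (C : 'rV[R]_n) :=
  \rank (obs_mx A C) = n.

Definition ceigenvalue (R : rcfType) (n : nat) (A : 'M[R]_n) (z : R[i]) :=
  root (char_poly (map_mx (real_complex R) A)) z.

(* Main.v *)
Require Import Defs.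
From mathcomp Require Import all_boot all_order all_algebra.
From mathcomp Require Import complex.
From mathcomp Require Import ring lra zify.
Import Order.TTheory GRing.Theory Num.Theory.
Local Open Scope ring_scope.
Section Alt.
Context {R : rcfType}.
Implicit Types (w x y : nat -> R).

Definition mt (v : R) (s : bool) := if s then 0 < v else v < 0.

Fixpoint Tl x (m k : nat) (s : bool) : Prop :=
  match m with
  | 0 => True
  | m'.+1 => exists k', [/\ (k < k')%N, mt (x k') (~~ s) & Tl x m' k' (~~ s)]
  end.

Definition altseq x m lo s := exists k, [/\ (lo <= k)%N, mt (x k) s & Tl x m k s].

Lemma Tl_ext x y : (forall k s, mt (x k) s = mt (y k) s) ->
  forall m k s, Tl x m k s -> Tl y m k s.
Proof.
move=> e; elim=> [//|m IH] k s /= [k' [h1 h2 h3]].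
by exists k'; split=> //; [rewrite -e | apply: IH].
Qed.

Lemma altseq_ext x y : (forall k s, mt (x k) s = mt (y k) s) ->
  forall m lo s, altseq x m lo s -> altseq y m lo s.
Proof.
move=> e m lo s [k [h1 h2 h3]]; exists k; split=> //; first by rewrite -e.
exact: Tl_ext h3.
Qed.

Lemma mtD a b s : mt (a + b) s -> mt a s \/ mt b s.
Proof.
rewrite /mt; case: s => /= h.
- by have [ha|ha] := ltP 0 a; [left | right; lra].
- by have [ha|ha] := ltP a 0; [left | right; lra].
Qed.

Lemma mt0 s : mt 0 s = false.
Proof. by case: s; rewrite /mt ltxx. Qed.

Lemma exists_mt (F : nat -> R) a b s : mt (\sum_(a <= j < b) F j) s ->
  exists j, [/\ (a <= j)%N, (j < b)%N & mt (F j) s].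
Proof.
elim: b => [|b IH]; first by rewrite big_geq // mt0.
have [ab|ba] := leqP a b; last first.
  by rewrite big_geq ?mt0.
rewrite big_nat_recr //= => /mtD [/IH [j [h1 h2 h3]]|h].
- by exists j; split=> //; rewrite ltnS ltnW.
- by exists b.
Qed.

Definition a' w k := (if k is k'.+1 then w k' else 0) - w k.

Lemma tele w p k : (p <= k)%N -> \sum_(p.+1 <= j < k.+1) a' w j = w p - w k.
Proof.
elim: k => [|k IH]; first by rewrite leqn0 => /eqP ->; rewrite big_geq // subrr.
rewrite leq_eqVlt => /orP [/eqP ->|hp]; first by rewrite big_geq // subrr.
by rewrite big_nat_recr //= IH // /a'; ring.
Qed.

Lemma tele0 w k : \sum_(0 <= j < k.+1) a' w j = - w k.
Proof.
rewrite big_ltn // tele // /a'; ring.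
Qed.

Lemma mt_ne0 v s : mt v s -> v != 0.
Proof. by case: s => /= h; rewrite ?(gt_eqF h) ?(lt_eqF h). Qed.

Lemma keyQ w N : (forall k, (N <= k)%N -> w k = 0) ->
  forall m p s, mt (w p) s -> Tl w m p s ->
  exists j, [/\ (p < j)%N, mt (a' w j) s & Tl (a' w) m j s].
Proof.
move=> wN; elim=> [|m IH] p s hp /=.
- move=> _.
  have pN : (p < N)%N.
    rewrite ltnNge; apply/negP => /wN h; move: hp; by rewrite h mt0.
  have : mt (\sum_(p.+1 <= j < N.+1) a' w j) s.
    by rewrite tele ?(wN N) ?subr0 // ltnW.
  by case/exists_mt => j [h1 h2 h3]; exists j.
- case=> k [hk1 hk2 hk3].
  have : mt (\sum_(p.+1 <= j < k.+1) a' w j) s.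
    rewrite tele; last exact: ltnW.
    by move: (hp) (hk2); rewrite /mt; case: (s) => /= ? ?; lra.
  case/exists_mt => j [h1 h2 h3]; exists j; split=> //.
  have [j' [h1' h2' h3']] := IH k (~~ s) hk2 hk3.
  by exists j'; split=> //; apply: leq_ltn_trans h1'.
Qed.

Lemma key w N : (forall k, (N <= k)%N -> w k = 0) ->
  forall m s, altseq w m 0 s -> altseq (a' w) m.+1 0 (~~ s).
Proof.
move=> wN m s [k0 [_ h2 h3]].
have : mt (\sum_(0 <= j < k0.+1) a' w j) (~~ s).
  by rewrite tele0; move: (h2); rewrite /mt; case: (s) => /= ?; lra.
case/exists_mt => j [_ hj1 hj2]; exists j; split=> //=.
have [j' [h1' h2' h3']] := keyQ w N wN _ _ _ h2 h3.
by exists j'; rewrite negbK; split=> //; apply: leq_ltn_trans h1'.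
Qed.

Lemma Tl_count x m k s : Tl x m k s ->
  exists sq : seq nat, [/\ uniq sq, size sq = m & all (fun j => (k < j)%N && (x j != 0)) sq].
Proof.
elim: m k s => [|m IH] k s /=; first by exists [::].
case=> k' [h1 h2 /IH [sq [u sz a]]]; exists (k' :: sq); split=> //=.
- rewrite u andbT; apply/negP => /(allP a) /andP [].
  by rewrite ltnn.
- by rewrite sz.
- rewrite h1 (mt_ne0 _ _ h2) /=; apply/allP => j /(allP a) /andP [hj ->].
  by rewrite (ltn_trans h1 hj).
Qed.

Lemma altseq_count x m lo s : altseq x m lo s ->
  exists sq : seq nat, [/\ uniq sq, size sq = m.+1 & all (fun j => x j != 0) sq].
Proof.
case=> k [_ h2 /Tl_count [sq [u sz a]]]; exists (k :: sq); split=> //=.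
- rewrite u andbT; apply/negP => /(allP a) /andP []; by rewrite ltnn.
- by rewrite sz.
- rewrite (mt_ne0 _ _ h2) /=; apply/allP => j /(allP a) /andP [].
  by [].
Qed.

End Alt.
Section P.
Variable R : rcfType.

Lemma mt_pmul (v c : R) s : 0 < c -> mt (v * c) s = mt v s.
Proof. by move=> hc; case: s; rewrite /mt ?pmulr_lgt0 ?pmulr_llt0. Qed.

Lemma mulXc (g : {poly R}) (lam : R) : 0 < lam -> forall m s,
  altseq (fun k => g`_k) m 0 s ->
  altseq (fun k => (('X - lam%:P) * g)`_k) m.+1 0 (~~ s).
Proof.
move=> hl m s h.
pose w k := g`_k * lam ^+ k.+1.
have hw : altseq w m 0 s.
  by apply: altseq_ext h => k s'; rewrite /w mt_pmul // exprn_gt0.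
have wN : forall k, (size g <= k)%N -> w k = 0.
  by move=> k hk; rewrite /w nth_default // mul0r.
have := key _ _ wN _ _ hw.
apply: altseq_ext => k s'.
have -> : a' w k = (('X - lam%:P) * g)`_k * lam ^+ k.
  rewrite mulrBl coefB coefXM coefCM /a' /w.
  case: k => [|k] /=; first by ring.
  rewrite !exprS; ring.
by rewrite mt_pmul // exprn_gt0.
Qed.

Lemma alt_nz (f : {poly R}) : f != 0 -> exists s, altseq (fun k => f`_k) 0 0 s.
Proof.
move=> fn0; exists (0 < lead_coef f); exists (size f).-1; split=> //.
rewrite /mt; have : lead_coef f != 0 by rewrite lead_coef_eq0.
rewrite neq_lt => /orP [h|h]; last by rewrite h.
by rewrite ltNge (ltW h).
Qed.

Lemma big_alt (g : {poly R}) : g != 0 -> forall d (q : {poly R}), size q = d.+1 ->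
  (forall z : R[i], root (map_poly (real_complex R) q) z -> 0 < z) ->
  exists s, altseq (fun k => (q * g)`_k) d 0 s.
Proof.
move=> gn0; elim=> [|d IH] q sq hq.
  apply: alt_nz; rewrite mulf_eq0 negb_or gn0 andbT -size_poly_eq0 sq //.
have : size (map_poly (real_complex R) q) != 1%N by rewrite size_map_poly sq.
case/closed_rootP => z rz.
have := hq z rz; rewrite ltcE => /andP [/eqP imz rez].
have zE : z = real_complex R (complex.Re z).
  by case: z imz {rz rez} => a b /= ->.
move: rz; rewrite zE /root; set f := real_complex R; rewrite (horner_map f) fmorph_eq0 => rq.
case/factor_theorem: rq => q' qE.
have q'n0 : q' != 0.
  by apply/eqP => q'0; move: sq; rewrite qE q'0 mul0r size_poly0.
have sq' : size q' = d.+1.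
  by move: sq; rewrite qE size_mul ?polyXsubC_eq0 // size_XsubC addn2 => -[].
have hq' : forall z : R[i], root (map_poly (real_complex R) q') z -> 0 < z.
  by move=> z' rz'; apply: hq; rewrite qE rmorphM rootM rz'.
have [s hs] := IH q' sq' hq'.
exists (~~ s).
have -> : q * g = ('X - (complex.Re z)%:P) * (q' * g) by rewrite qE; ring.
exact: mulXc.
Qed.

End P.
Theorem corollary1 (R : rcfType) (n : nat) (A : 'M[R]_n) (C : 'rV[R]_n) :
  (1 <= n)%N ->
  observable A C ->
  (forall z : R[i], ceigenvalue A z -> z != 0) ->
  (forall z : R[i], ceigenvalue A z -> 0 < z) ->
  forall t : 'I_n -> nat, injective t ->
  \rank (sample_obs_mx A C t) = n.
Proof.
destruct n as [|n]; first by [].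
move=> _ obs _ pos t tinj.
apply: mxrank_unit; rewrite unitmxE unitfE; apply/negP => /det0P [c c0 cS].
pose F : {poly R} := \sum_(i < n.+1) c 0 i *: 'X^(t i).
have coefF k : F`_k = \sum_(i < n.+1) c 0 i * (k == t i)%:R.
  by rewrite /F coef_sum; apply: eq_bigr => i _; rewrite coefZ coefXn.
have Fsupp k : F`_k != 0 -> k \in [seq t i | i <- enum 'I_n.+1].
  rewrite coefF => nz; apply/mapP.
  case: (pickP (fun i => k == t i)) => [i /eqP ki | none].
    by exists i; rewrite ?mem_enum.
  by move: nz; rewrite big1 ?eqxx // => i _; rewrite none mulr0.
have Fn0 : F != 0.
  move: c0; apply: contraNneq => F0; apply/eqP/rowP => i; rewrite mxE.
  have := congr1 (fun p : {poly R} => p`_(t i)) F0.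
  rewrite coefF coef0 (bigD1 i) //= eqxx mulr1 big1 ?addr0 // => j ji.
  by rewrite eq_sym (inj_eq tinj) (negbTE ji) mulr0.
have hS : c *m sample_obs_mx A C t = C *m horner_mx A F.
  rewrite mulmx_sum_row /F rmorph_sum mulmx_sumr; apply: eq_bigr => i _.
  rewrite /= (horner_mxZ A) rmorphXn /= horner_mx_X -scalemxAr; congr (_ *: _).
  by apply/rowP => j; rewrite !mxE.
pose p := char_poly A.
pose r := F %% p.
have pn0 : p != 0 by rewrite monic_neq0 // char_poly_monic.
have hr : horner_mx A F = horner_mx A r.
  by rewrite {1}(divp_eq F p) rmorphD rmorphM /= Cayley_Hamilton mulr0 add0r.
have sr : (size r <= n.+1)%N.
  by have := ltn_modp F p; rewrite pn0 size_char_poly ltnS.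
have rE : r = \poly_(i < n.+1) r`_i.
  apply/polyP => k; rewrite coef_poly; case: ltnP => // h.
  by rewrite nth_default // (leq_trans sr h).
have hr2 : C *m horner_mx A r = (\row_(k < n.+1) r`_k) *m obs_mx A C.
  rewrite [RHS]mulmx_sum_row [in LHS]rE poly_def rmorph_sum /= mulmx_sumr; apply: eq_bigr => i _.
  rewrite (horner_mxZ A) rmorphXn /= horner_mx_X -scalemxAr mxE; congr (_ *: _).
  by apply/rowP => j; rewrite !mxE.
have r0 : r = 0.
  have rf : row_free (obs_mx A C) by rewrite /row_free obs.
  move: cS; rewrite hS hr hr2 => /eqP; rewrite (mulmx_free_eq0 _ rf) => /eqP rw.
  rewrite rE; apply/polyP => k; rewrite coef_poly coef0; case: ltnP => // h.
  by have := congr1 (fun v : 'rV[R]_n.+1 => v 0 (Ordinal h)) rw; rewrite !mxE.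
have FE : F = p * (F %/ p).
  by rewrite mulrC divpK //; apply/modp_eq0P.
have gn0 : F %/ p != 0.
  by apply: contraNneq Fn0 => g0; rewrite FE g0 mulr0.
have hroots : forall z : R[i], root (map_poly (real_complex R) p) z -> 0 < z.
  by move=> z rz; apply: pos; rewrite /ceigenvalue -map_char_poly.
have [s hs] := @big_alt R _ gn0 _ _ (size_char_poly A) hroots.
rewrite -FE in hs.
have [sq [u sz al]] := altseq_count _ _ _ _ hs.
have := uniq_leq_size u (s2 := [seq t i | i <- enum 'I_n.+1]).
rewrite sz size_map size_enum_ord ltnn => h; suff: false by []; apply: h.
by move=> k /(allP al) /Fsupp.
Qed.
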